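(* Let $0<b<c$ and $x_1,\dots,x_T\in\mathbb{R}^d$. Define $D_0=\frac{bc}{c-b}I$ and $D_t=\big(D_{t-1}^{-1}+c^{-1}I\big)^{-1}+x_tx_t^\top$ for $t\ge1$. Then \[ \sum_{t=1}^T x_t^\top D_t^{-1}x_t\le \ln\Big|\tfrac1b D_T\Big|+c^{-1}\sum_{t=1}^T\mathrm{Tr}(D_{t-1}), \] where $|\cdot|$ denotes the determinant. *)

(* Defs.v *)
From mathcomp Require Import all_boot all_order all_algebra.
From mathcomp Require Import all_classical all_reals all_analysis.
Set Implicit Arguments. Unset Strict Implicit. Unset Printing Implicit Defensive.
Import Order.TTheory GRing.Theory Num.Theory.
Local Open Scope ring_scope.

Fixpoint Dmat (R : realType) (d : nat) (b c : R) (x : nat -> 'cV[R]_d) (t : nat)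
  : 'M[R]_d :=
  match t with
  | 0 => (b * c / (c - b))%:M
  | t'.+1 => invmx (invmx (Dmat b c x t') + c^-1%:M) + x t'.+1 *m (x t'.+1)^T
  end.

(* Main.v *)
Require Import Defs.
From mathcomp Require Import all_boot all_order all_algebra.
From mathcomp Require Import all_classical all_reals all_analysis.
From mathcomp.algebra_tactics Require Import ring lra.
Import Order.TTheory GRing.Theory Num.Theory.
Local Open Scope ring_scope.
Set Implicit Arguments. Unset Strict Implicit. Unset Printing Implicit Defensive.

Section PD.
Variable R : realType.

Definition posdef n (A : 'M[R]_n) :=
  A^T = A /\ forall u : 'cV[R]_n, u != 0 -> 0 < (u^T *m A *m u) 0 0.

Lemma mx11_mulE (A B : 'M[R]_1) : (A *m B) 0 0 = A 0 0 * B 0 0.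
Proof. by rewrite mxE big_ord1. Qed.

Lemma posdef_ge0 n (A : 'M[R]_n) (u : 'cV[R]_n) : posdef A -> 0 <= (u^T *m A *m u) 0 0.
Proof.
case=> _ H; have [->|/H /ltW //] := eqVneq u 0.
by rewrite trmx0 !mul0mx mxE.
Qed.

Lemma sumsq_gt0 n (u : 'cV[R]_n) : u != 0 -> 0 < (u^T *m u) 0 0.
Proof.
move=> u0; rewrite mxE lt_def sumr_ge0 ?andbT; last first.
  by move=> i _; rewrite mxE -expr2 sqr_ge0.
have Hge : forall i : 'I_n, true -> 0 <= u^T 0 i * u i 0.
  by move=> i _; rewrite mxE -expr2 sqr_ge0.
apply/negP=> /eqP/(psumr_eq0P Hge) H; move/negP: u0; apply; apply/eqP/matrixP=> i j.
rewrite ord1 mxE; have := H i isT; rewrite mxE -expr2 => /eqP.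
by rewrite sqrf_eq0 => /eqP.
Qed.

Lemma posdef_scalar n (a : R) : 0 < a -> posdef (a%:M : 'M[R]_n).
Proof.
move=> a0; split; first exact: tr_scalar_mx.
move=> u u0; rewrite mul_mx_scalar -scalemxAl mxE mulr_gt0 //.
exact: sumsq_gt0.
Qed.

Lemma posdefD n (A B : 'M[R]_n) : posdef A -> posdef B -> posdef (A + B).
Proof.
move=> [sA pA] [sB pB]; split; first by rewrite raddfD /= sA sB.
move=> u u0; rewrite mulmxDr mulmxDl mxE addr_gt0 //; [exact: pA|exact: pB].
Qed.

Lemma posdefZ n a (A : 'M[R]_n) : 0 < a -> posdef A -> posdef (a *: A).
Proof.
move=> a0 [sA pA]; split; first by rewrite linearZ /= sA.
by move=> u u0; rewrite -scalemxAr -scalemxAl mxE mulr_gt0 //; apply: pA.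
Qed.

Lemma posdef_rank1 n (A : 'M[R]_n) (x : 'cV[R]_n) : posdef A -> posdef (A + x *m x^T).
Proof.
move=> [sA pA]; split; first by rewrite raddfD /= sA trmx_mul trmxK.
move=> u u0; rewrite mulmxDr mulmxDl mxE ltr_wpDr //; last exact: pA.
rewrite mulmxA -(mulmxA (u^T *m x)) mx11_mulE.
have ->: x^T *m u = (u^T *m x)^T by rewrite trmx_mul trmxK.
by rewrite [X in _ * X]mxE -expr2 sqr_ge0.
Qed.

Lemma posdef_unit n (A : 'M[R]_n) : posdef A -> A \in unitmx.
Proof.
move=> [sA pA]; rewrite unitmxE unitfE; apply/negP=> /det0P[v v0 vA].
have := pA v^T; rewrite trmxK vA mul0mx mxE ltxx => H.
have : v^T != 0 by rewrite trmx_eq0.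
by move/H.
Qed.

Lemma posdef_inv n (A : 'M[R]_n) : posdef A -> posdef (invmx A).
Proof.
move=> pdA; have uA := posdef_unit pdA; case: pdA => sA pA.
split; first by rewrite trmx_inv sA.
move=> u u0; set w := invmx A *m u.
have ->: u = A *m w by rewrite /w mulKVmx.
have w0 : w != 0.
  by apply: contra u0 => /eqP w0; rewrite -[u](mulKVmx uA) -/w w0 mulmx0.
rewrite trmx_mul sA -!mulmxA mulKmx //; rewrite mulmxA; exact: pA.
Qed.

Lemma posdef_diag n (A : 'M[R]_n) i : posdef A -> 0 < A i i.
Proof.
move=> [_ pA]; have := pA (delta_mx i 0).
rewrite trmx_delta -rowE -colE !mxE; apply.
apply/negP=> /eqP/matrixP/(_ i 0); rewrite !mxE !eqxx /=.
by move/eqP; rewrite oner_eq0.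
Qed.

Lemma posdef11 (A : 'M[R]_1) : posdef A -> 0 < A 0 0.
Proof. by move=> /posdef_diag; apply. Qed.


Lemma det1_rank1 n (u : 'M[R]_(n,1)) (y : 'M[R]_(1,n)) :
  \det (1%:M + u *m y) = 1 + (y *m u) 0 0.
Proof.
pose M : 'M[R]_(1 + n) := block_mx 1%:M (- y) u 1%:M.
have E1 : block_mx 1%:M 0 (- u) 1%:M *m M = block_mx 1%:M (- y) 0 (1%:M + u *m y).
  rewrite /M mulmx_block !(mul1mx, mul0mx, mulmx1, addr0, add0r) mulNmx mulmxN opprK.
  by rewrite addNr addrC.
have E2 : block_mx 1%:M y 0 1%:M *m M = block_mx (1%:M + y *m u) 0 u 1%:M.
  rewrite /M mulmx_block !(mul1mx, mul0mx, mulmx1, addr0, add0r).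
  by rewrite addNr.
have := congr1 determinant E1; rewrite det_mulmx det_lblock det_ublock !det1 !mul1r.
move=> <-; have := congr1 determinant E2.
rewrite det_mulmx det_ublock det_lblock !det1 !mul1r mulr1 => ->.
by rewrite det_mx11 !mxE.
Qed.

Lemma det_rank1 n (A : 'M[R]_n) (x : 'M[R]_(n,1)) (y : 'M[R]_(1,n)) :
  A \in unitmx -> \det (A + x *m y) = \det A * (1 + (y *m invmx A *m x) 0 0).
Proof.
move=> uA; have ->: A + x *m y = A *m (1%:M + invmx A *m x *m y).
  by rewrite mulmxDr mulmx1 !mulmxA mulmxV // mul1mx.
by rewrite det_mulmx det1_rank1 mulmxA.
Qed.


Lemma posdef_block n1 n2 (A : 'M[R]_n1) B C (Dm : 'M[R]_n2) :
  posdef (block_mx A B C Dm) -> [/\ posdef A, posdef Dm & C^T = B].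
Proof.
move=> [sP pP]; move: (sP); rewrite tr_block_mx => /eq_block_mx[sA sC sB sD].
split => //.
- split => // w w0; have := pP (col_mx w 0).
  rewrite tr_col_mx trmx0 mul_row_block mul_row_col !(mul0mx, mulmx0, addr0).
  by apply; rewrite col_mx_eq0 negb_and w0.
- split => // w w0; have := pP (col_mx 0 w).
  rewrite tr_col_mx trmx0 mul_row_block mul_row_col !(mul0mx, mulmx0, add0r).
  by apply; rewrite col_mx_eq0 negb_and w0 orbT.
Qed.

Lemma posdef_congr n (P L : 'M[R]_n) :
  posdef P -> L \in unitmx -> posdef (L *m P *m L^T).
Proof.
move=> [sP pP] uL; split; first by rewrite !trmx_mul trmxK sP mulmxA.
move=> u u0; have := pP (L^T *m u).
rewrite trmx_mul trmxK !mulmxA; apply.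
apply: contra u0 => /eqP H; rewrite -[u](mulKmx (_ : L^T \in unitmx)) ?H ?mulmx0 //.
by rewrite unitmx_tr.
Qed.

Lemma hadamard n (P : 'M[R]_n) : posdef P -> 0 < \det P /\ \det P <= \prod_i P i i.
Proof.
elim: n P => [|n IH] P pdP.
  by rewrite det_mx00 big_ord0 ltr01 lexx.
pose P' : 'M[R]_(1 + n) := P.
pose ul := ulsubmx P'; pose ur := ursubmx P'; pose dl := dlsubmx P'; pose dr := drsubmx P'.
have eP : P' = block_mx ul ur dl dr by rewrite submxK.
have pdB : posdef (block_mx ul ur dl dr) by rewrite -eP.
have [pul pdr sdl] := posdef_block pdB.
have uul := posdef_unit pul; have udr := posdef_unit pdr.
pose L : 'M[R]_(1 + n) := block_mx 1%:M 0 (- (dl *m invmx ul)) 1%:M.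
pose S := dr - dl *m invmx ul *m ur.
have detL : \det L = 1 by rewrite det_lblock !det1 mulr1.
have uL : L \in unitmx by rewrite unitmxE detL unitr1.
have LP : L *m block_mx ul ur dl dr = block_mx ul ur 0 S.
  rewrite mulmx_block !(mul1mx, mul0mx, addr0) mulNmx mulmxKV // addNr.
  by rewrite mulNmx addrC.
have LPL : L *m block_mx ul ur dl dr *m L^T = block_mx ul 0 0 S.
  rewrite LP tr_block_mx !trmx1 trmx0 raddfN /= trmx_mul trmx_inv.
  rewrite pul.1 sdl mulmx_block !(mulmx1, mulmx0, mul0mx, addr0, add0r).
  by rewrite mulmxN mulKVmx // addNr.
have [_ pS _] := posdef_block (eq_ind _ _ (posdef_congr pdB uL) _ LPL).
have detP : \det P = ul 0 0 * \det S.
  have : \det P' = \det (L *m block_mx ul ur dl dr) by rewrite det_mulmx detL mul1r -eP.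
  by rewrite LP det_ublock det_mx11.
have [dS _] := IH S pS.
have [ddr hdr] := IH dr pdr.
have ul0 := posdef11 pul.
have SleD : \det S <= \det dr.
  rewrite /S -mulNmx det_rank1 // ler_piMr ?(ltW ddr) //.
  rewrite mulmxN mulmxA mxE mx11_mulE gerDl oppr_le0 mulr_ge0 //.
    by rewrite -sdl; apply: posdef_ge0; apply: posdef_inv.
  by apply/ltW/posdef11/posdef_inv.
rewrite detP; split; first exact: mulr_gt0.
rewrite big_ord_recl.
have -> : P ord0 ord0 = ul 0 0.
  by rewrite /ul /P' !mxE; congr (P _ _); apply: val_inj.
apply: ler_wpM2l; first exact: ltW.
apply: (le_trans SleD); apply: (le_trans hdr); rewrite le_eqVlt; apply/orP; left.
apply/eqP; apply: eq_bigr => i _.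
by rewrite /dr /P' !mxE; congr (P _ _); apply: val_inj.
Qed.


Lemma q_le_ln (q : R) : 0 <= q -> q / (1 + q) <= ln (1 + q).
Proof.
move=> q0; have q1 : 0 < 1 + q by lra.
have h : -1 < - (q / (1 + q)).
  rewrite ltrN2 ltr_pdivrMr // mul1r; lra.
have := le_ln1Dx h.
have -> : 1 - q / (1 + q) = (1 + q)^-1 by field; lra.
rewrite lnV ?posrE //; lra.
Qed.

Lemma trace_bound n (D : 'M[R]_n) (c : R) : 0 < c -> posdef D ->
  ln (\det (1%:M + c^-1 *: D)) <= c^-1 * \tr D.
Proof.
move=> c0 pD; have ci : 0 < c^-1 by rewrite invr_gt0.
have pE : posdef (1%:M + c^-1 *: D) by apply: posdefD; [apply: posdef_scalar; exact: ltr01|exact: posdefZ].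
have [dE hE] := hadamard pE.
rewrite -[_ * \tr D]expRK ler_ln ?posrE ?expR_gt0 //.
apply: (le_trans hE).
rewrite /mxtrace mulr_sumr expR_sum; apply: ler_prod => i _.
rewrite !mxE eqxx mulr1n; apply/andP; split.
  by apply: addr_ge0; [exact: ler01|apply: mulr_ge0; [exact: ltW|exact/ltW/posdef_diag]].
exact: expR_ge1Dx.
Qed.

Lemma step n (D : 'M[R]_n) (c : R) (x : 'cV[R]_n) : 0 < c -> posdef D ->
  posdef (invmx (invmx D + c^-1%:M) + x *m x^T) /\
  (x^T *m invmx (invmx (invmx D + c^-1%:M) + x *m x^T) *m x) 0 0
    <= ln (\det (invmx (invmx D + c^-1%:M) + x *m x^T)) - ln (\det D) + c^-1 * \tr D.
Proof.
move=> c0 pD; have ci : 0 < c^-1 by rewrite invr_gt0.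
set B := invmx D + c^-1%:M.
have pB : posdef B by apply: posdefD; [exact: posdef_inv|exact: posdef_scalar].
set A := invmx B; have pA : posdef A by exact: posdef_inv.
set N := A + x *m x^T; have pN : posdef N by exact: posdef_rank1.
split => //.
have uA := posdef_unit pA; have uN := posdef_unit pN; have uD := posdef_unit pD.
set q := (x^T *m invmx A *m x) 0 0.
have q0 : 0 <= q by apply: posdef_ge0; exact: posdef_inv.
have q1 : 0 < 1 + q by lra.
have detN : \det N = \det A * (1 + q) by rewrite /N det_rank1.
have NA : N *m (invmx A *m x) = (1 + q) *: x.
  rewrite /N mulmxDl mulKVmx // -!mulmxA (mulmxA x^T) [x^T *m _ *m _]mx11_scalar.
  by rewrite mul_mx_scalar scalerDl scale1r.
have Nx : invmx N *m x = (1 + q)^-1 *: (invmx A *m x).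
  rewrite -[invmx A *m x](mulKmx uN) NA -scalemxAr scalerA mulVf ?scale1r //.
  by apply/lt0r_neq0.
have -> : (x^T *m invmx N *m x) 0 0 = q / (1 + q).
  by rewrite -mulmxA Nx -scalemxAr mxE mulrC mulmxA.
have [dA _] := hadamard pA; have [dN _] := hadamard pN; have [dD _] := hadamard pD.
have [dB _] := hadamard pB.
have lnN : ln (\det N) = ln (\det A) + ln (1 + q) by rewrite detN lnM ?posrE.
have lnA : ln (\det A) = - ln (\det B) by rewrite /A det_inv lnV ?posrE.
have BD : \det B * \det D = \det (1%:M + c^-1 *: D).
  by rewrite -det_mulmx /B mulmxDl mulVmx // mul_scalar_mx.
have lnBD : ln (\det B) + ln (\det D) = ln (\det (1%:M + c^-1 *: D)).
  by rewrite -lnM ?posrE // BD.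
have := trace_bound c0 pD; have := q_le_ln q0; lra.
Qed.

End PD.

Lemma Dpos (R : realType) (d : nat) (b c : R) (x : nat -> 'cV[R]_d)
  (hb : 0 < b) (hbc : b < c) t : posdef (Dmat b c x t).
Proof.
have c0 : 0 < c by exact: lt_trans hbc.
elim: t => [|t IH] /=.
  apply: posdef_scalar; apply: divr_gt0; [exact: mulr_gt0|by rewrite subr_gt0].
exact: (step (x t.+1) c0 IH).1.
Qed.

Unset Implicit Arguments.
Theorem lemma5 (R : realType) (d T : nat) (b c : R) (x : nat -> 'cV[R]_d)
  (hb : 0 < b) (hbc : b < c) :
  \sum_(1 <= t < T.+1) ((x t)^T *m invmx (Dmat b c x t) *m x t) 0 0
  <= ln (\det (b^-1 *: Dmat b c x T))
     + c^-1 * \sum_(1 <= t < T.+1) \tr (Dmat b c x t.-1).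
Proof.
have c0 : 0 < c by exact: lt_trans hbc.
have key : forall T, \sum_(1 <= t < T.+1) ((x t)^T *m invmx (Dmat b c x t) *m x t) 0 0
  <= ln (\det (Dmat b c x T)) - ln (\det (Dmat b c x 0))
     + c^-1 * \sum_(1 <= t < T.+1) \tr (Dmat b c x t.-1).
  elim=> [|k IH].
    by rewrite !big_geq // mulr0 addr0 subrr.
  rewrite (big_nat_recr k.+1 1) // (big_nat_recr k.+1 1) //.
  have := (step (x k.+1) c0 (Dpos x hb hbc k)).2.
  have e : Dmat b c x k.+1 = invmx (invmx (Dmat b c x k) + c^-1%:M) + x k.+1 *m (x k.+1)^T by [].
  rewrite -e [k.+1.-1]/=.
  move: IH; set s1 := \sum_(1 <= t < k.+1) _; set s2 := \sum_(1 <= t < k.+1) _.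
  rewrite /= -e.
  have e0 : Dmat b c x 0 = (b * c / (c - b))%:M by [].
  rewrite -e0; lra.
apply: (le_trans (key T)).
have [dT _] := hadamard (Dpos x hb hbc T).
set s := b * c / (c - b).
have s0 : b <= s.
  rewrite /s ler_pdivlMr ?subr_gt0 //.
  have : 0 < b * b by exact: mulr_gt0.
  lra.
have bi : 0 < b^-1 by rewrite invr_gt0.
rewrite detZ lnM ?posrE ?exprn_gt0 // /= det_scalar.
have : 0 <= ln (b^-1 ^+ d) + ln (s ^+ d).
  rewrite -lnM ?posrE ?exprn_gt0 //; last exact: lt_le_trans s0.
  apply: ln_ge0; rewrite -exprMn; apply: exprn_ege1.
  by rewrite mulrC ler_pdivlMr // mul1r.
lra.
Qed.
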